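(* Let $p,q\in(0,1/2)$ and let $S_1(x)=px$, $S_2(x)=qx$, $S_3(x)=px+1-p$, $S_4(x)=qx+1-q$. Let $K$ be the attractor of $\{S_1,S_2,S_3,S_4\}$ and $A=S_3(K)\cup S_4(K)$. Suppose that for all $m,n\in\mathbb N$, $S_1^m(A)\cap S_2^n(A)=\varnothing$. Then (i) $K=\{0\}\cup\bigcup_{m,n=0}^{\infty}S_1^mS_2^n(A)$, where the sets $S_1^mS_2^n(A)$, $(m,n)\in(\mathbb N\cup\{0\})^2$, are pairwise disjoint (and do not contain $0$); (ii) for any $m,n\in\mathbb N\cup\{0\}$, $S_1^m(K)\cap S_2^n(K)=S_1^mS_2^n(K)$.
   Context: The attractor of a finite system of contractions $\{S_1,\dots,S_m\}$ of $\mathbb R$ is the unique nonempty compact set $K$ with $K=\bigcup_i S_i(K)$. *)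

(* Defs.v *)
From HB Require Import structures.
From mathcomp Require Import all_boot all_order all_algebra.
From mathcomp Require Import all_classical all_reals all_analysis.
Set Implicit Arguments. Unset Strict Implicit. Unset Printing Implicit Defensive.
Import Order.TTheory GRing.Theory Num.Theory numFieldNormedType.Exports.
Local Open Scope classical_set_scope.
Local Open Scope ring_scope.

(* The attractor of the finite IFS given by the list Ss of maps R -> R:
   the nonempty compact set K with K = \bigcup_i S_i(K).  (The attractor is
   unique for a system of contractions, so any set with this property is
   "the" attractor.) *)
Definition is_attractor (R : realType) (Ss : seq (R -> R)) (K : set R) : Prop :=
  K !=set0 /\ compact K /\
  K = \bigcup_(i in [set i : nat | (i < size Ss)%N]) (nth id Ss i @` K).

(* Main.v *)
Require Import Defs.
From HB Require Import structures.
From mathcomp Require Import all_boot all_order all_algebra.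
From mathcomp Require Import all_classical all_reals all_analysis.
From mathcomp Require Import lra ring.
Import Order.TTheory GRing.Theory Num.Theory numFieldNormedType.Exports.
Local Open Scope classical_set_scope.
Local Open Scope ring_scope.
Set Implicit Arguments. Unset Strict Implicit.

Lemma iter_mul (R : realType) (c x : R) n :
  iter n (fun y => c * y) x = c ^+ n * x.
Proof. elim: n => [|n IH] /=; first by rewrite mul1r. by rewrite IH exprS mulrA. Qed.

Lemma pow_big (R : realType) (x : R) : 0 < x -> exists N, 1 < 2 ^+ N * x.
Proof.
move=> x0; exists (Num.Def.trunc x^-1).+1.
set N := (Num.Def.trunc x^-1).+1.
have h1 : x^-1 < N%:R := truncnS_gt _.
have h2 : (N%:R : R) <= 2 ^+ N.
  by rewrite -natrX ler_nat ltnW // ltn_expl.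
have h3 : x^-1 * x = 1 by rewrite mulVf // gt_eqF.
have : x^-1 * x < N%:R * x by rewrite ltr_pM2r.
rewrite h3 => h4; apply: (lt_le_trans h4); rewrite ler_pM2r //.
Qed.

Record hyps (R : realType) (p q : R) (K : set R) : Prop := Hyps {
  hp : 0 < p < 2^-1;
  hq : 0 < q < 2^-1;
  HKinv : forall x, K x -> (exists2 y, K y & x = p * y) \/ (exists2 y, K y & x = q * y)
     \/ (((fun x => p * x + 1 - p) @` K) `|` ((fun x => q * x + 1 - q) @` K)) x;
  HKp : forall y, K y -> K (p * y);
  HKq : forall y, K y -> K (q * y);
  HA : ((fun x => p * x + 1 - p) @` K) `|` ((fun x => q * x + 1 - q) @` K) `<=` K;
  HKb : exists M, forall x, K x -> `|x| <= M;
  HKc : closed K;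
  HK0 : K !=set0;
  Hdis : forall i j a a', (0 < i)%N -> (0 < j)%N ->
     (((fun x => p * x + 1 - p) @` K) `|` ((fun x => q * x + 1 - q) @` K)) a ->
     (((fun x => p * x + 1 - p) @` K) `|` ((fun x => q * x + 1 - q) @` K)) a' ->
     p ^+ i * a = q ^+ j * a' -> False
}.

Section S.
Variables (R : realType) (p q : R) (K : set R).
Hypothesis H : hyps p q K.
Let A := ((fun x => p * x + 1 - p) @` K) `|` ((fun x => q * x + 1 - q) @` K).

Lemma K01 x : K x -> 0 <= x <= 1.
Proof.
have [/andP[p0 p1] /andP[q0 q1]] := (hp H, hq H).
have [M HM] := HKb H.
have ubK : has_ubound K.
  by exists M => y /HM; rewrite ler_norml => /andP[].
have lbK : has_lbound K.
  by exists (- M) => y /HM; rewrite ler_norml => /andP[].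
move=> Kx; apply/andP; split.
  apply: le_trans (ge_inf lbK Kx).
  rewrite leNgt; apply/negP => m0; set m := inf K in m0.
  have : Num.min (p * m) (q * m) <= m.
    apply: lb_le_inf; first by exists x.
    move=> y Ky; rewrite ge_min.
    case: (HKinv H Ky) => [[z Kz ->]|[[z Kz ->]|[[z Kz <-]|[z Kz <-]]]];
      have zm := ge_inf lbK Kz; apply/orP.
    - by left; nra.
    - by right; nra.
    - by left; nra.
    - by right; nra.
  rewrite ge_min => /orP[]; nra.
apply: le_trans (ub_le_sup ubK Kx) _.
rewrite leNgt; apply/negP => s1; set s := sup K in s1.
have : s <= Num.max (p * s + 1 - p) (q * s + 1 - q).
  apply: ge_sup; first by exists x.
  move=> y Ky; rewrite le_max.
  case: (HKinv H Ky) => [[z Kz ->]|[[z Kz ->]|[[z Kz <-]|[z Kz <-]]]];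
    have zm := ub_le_sup ubK Kz; rewrite -/s in zm; apply/orP.
  - by left; nra.
  - by right; nra.
  - by left; nra.
  - by right; nra.
rewrite le_max => /orP[]; nra.
Qed.

Lemma Kpow n y : K y -> K (p ^+ n * y).
Proof.
elim: n => [|n IH] Ky; first by rewrite mul1r.
by rewrite exprS -mulrA; apply: (HKp H); apply: IH.
Qed.

Lemma Kqpow n y : K y -> K (q ^+ n * y).
Proof.
elim: n => [|n IH] Ky; first by rewrite mul1r.
by rewrite exprS -mulrA; apply: (HKq H); apply: IH.
Qed.

Lemma zero_in : K 0.
Proof.
have [/andP[p0 p1] /andP[q0 q1]] := (hp H, hq H).
apply: (HKc H) => B /nbhs_ballP [e e0 HB].
have [x0 Kx0] := HK0 H.
have /andP[x00 x01] := K01 Kx0.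
have [N HN] := pow_big e0.
exists (p ^+ N * x0); split; first exact: Kpow.
apply: HB; rewrite /ball /= sub0r normrN.
have P0 : 0 <= p ^+ N by rewrite exprn_ge0 // ltW.
have T0 : 0 < (2 : R) ^+ N by rewrite exprn_gt0.
have PT : p ^+ N * 2 ^+ N <= 1.
  by rewrite -exprMn exprn_ile1 //; nra.
have Px : p ^+ N * x0 <= p ^+ N by rewrite ler_piMr.
rewrite ger0_norm ?mulr_ge0 //.
apply: le_lt_trans Px _.
nra.
Qed.

Lemma Apos a : A a -> 2^-1 < a <= 1.
Proof.
have [/andP[p0 p1] /andP[q0 q1]] := (hp H, hq H).
case => -[z Kz <-]; have /andP[z0 z1] := K01 Kz; apply/andP; split; nra.
Qed.

Lemma AK a : A a -> K a.
Proof. exact: HA H a. Qed.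

Lemma decomp x : K x -> 0 < x -> exists m n a, A a /\ x = p ^+ m * (q ^+ n * a).
Proof.
have [/andP[p0 p1] /andP[q0 q1]] := (hp H, hq H).
move=> Kx x0; have [N] := pow_big x0.
elim: N x Kx x0 => [|N IH] x Kx x0 HN.
  have /andP[_ x1] := K01 Kx; rewrite expr0 mul1r in HN; lra.
have T0 : 0 < (2 : R) ^+ N by rewrite exprn_gt0.
rewrite exprS in HN.
case: (HKinv H Kx) => [[z Kz Ez]|[[z Kz Ez]|Ax]].
- have z0 : 0 < z by nra.
  have z2 : 2 * x < z by nra.
  have : 1 < 2 ^+ N * z by nra.
  case/(IH z Kz z0) => m [n [a [Aa Ea]]].
  by exists m.+1, n, a; split => //; rewrite Ez Ea exprS; ring.
- have z0 : 0 < z by nra.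
  have z2 : 2 * x < z by nra.
  have : 1 < 2 ^+ N * z by nra.
  case/(IH z Kz z0) => m [n [a [Aa Ea]]].
  by exists m, n.+1, a; split => //; rewrite Ez Ea exprS; ring.
- by exists 0%N, 0%N, x; split => //; rewrite !mul1r.
Qed.

Lemma pqn0 m n : p ^+ m * q ^+ n != 0.
Proof.
have [/andP[p0 p1] /andP[q0 q1]] := (hp H, hq H).
by rewrite gt_eqF // mulr_gt0 // exprn_gt0.
Qed.

Lemma Ascale i j a a' : A a -> A a' -> a = p ^+ i * (q ^+ j * a') -> i = 0%N /\ j = 0%N.
Proof.
have [/andP[p0 p1] /andP[q0 q1]] := (hp H, hq H).
move=> /Apos /andP[a0 a1] /Apos /andP[b0 b1] E.
have P1 k : p ^+ k <= 1 by rewrite exprn_ile1 // ltW //; lra.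
have Q1 k : q ^+ k <= 1 by rewrite exprn_ile1 // ltW //; lra.
have P0 k : 0 <= p ^+ k by rewrite exprn_ge0 // ltW.
have Q0 k : 0 <= q ^+ k by rewrite exprn_ge0 // ltW.
have X1 k : q ^+ k * a' <= 1 by rewrite mulr_ile1 // ?Q0; lra.
have X0 k : 0 <= q ^+ k * a' by rewrite mulr_ge0 ?Q0 //; lra.
case: i E => [|i] E; last first.
  have Y1 : p ^+ i * (q ^+ j * a') <= 1 by rewrite mulr_ile1.
  have Y0 : 0 <= p ^+ i * (q ^+ j * a') by rewrite mulr_ge0.
  rewrite exprS -mulrA in E; exfalso; nra.
case: j E => [|j] // E.
have Y1 := X1 j; have Y0 := X0 j.
rewrite expr0 mul1r exprS -mulrA in E; exfalso; nra.
Qed.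

Lemma core i j a a' : A a -> A a' -> p ^+ i * a = q ^+ j * a' -> i = 0%N /\ j = 0%N.
Proof.
move=> Aa Aa' E.
case: i E => [|i]; case: j => [|j] // E.
- have [] := Ascale (i:=0) (j:=j.+1) Aa Aa'; last by [].
  by rewrite -E !mul1r.
- have [] := Ascale (i:=i.+1) (j:=0) Aa' Aa; last by [].
  by rewrite expr0 mul1r; rewrite expr0 mul1r in E; rewrite E.
- by case: (Hdis H (ltn0Sn i) (ltn0Sn j) Aa Aa' E).
Qed.

Lemma disj m n m' n' a a' : A a -> A a' ->
  p ^+ m * (q ^+ n * a) = p ^+ m' * (q ^+ n' * a') -> m = m' /\ n = n'.
Proof.
move=> Aa Aa' E.
case: (leqP m m') => hm.
  move: E; rewrite -(subnKC hm); set i := (m' - m)%N => E.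
  case: (leqP n n') => hn.
    move: E; rewrite -(subnKC hn); set j := (n' - n)%N => E.
    have [-> ->] : (i = 0 /\ j = 0)%N.
      apply: (Ascale Aa Aa').
      apply: (mulfI (pqn0 m n)).
      transitivity (p ^+ m * (q ^+ n * a)); first ring.
      by rewrite E !exprD; ring.
    by rewrite !addn0.
  move: E; rewrite -(subnKC (ltnW hn)); set j := (n - n')%N => E.
  have [_ j0] : (i = 0 /\ j = 0)%N.
    apply: (core Aa' Aa).
    apply: (mulfI (pqn0 m n')).
    transitivity (p ^+ (m + i) * (q ^+ n' * a')); first by rewrite exprD; ring.
    by rewrite -E !exprD; ring.
  by move: hn; rewrite -subn_gt0 -/j j0.
move: E; rewrite -(subnKC (ltnW hm)); set i := (m - m')%N => E.
have i0 : (0 < i)%N by rewrite subn_gt0.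
case: (leqP n n') => hn.
  move: E; rewrite -(subnKC hn); set j := (n' - n)%N => E.
  have [i00 _] : (i = 0 /\ j = 0)%N.
    apply: (core Aa Aa').
    apply: (mulfI (pqn0 m' n)).
    transitivity (p ^+ (m' + i) * (q ^+ n * a)); first by rewrite exprD; ring.
    by rewrite E !exprD; ring.
  by rewrite i00 in i0.
move: E; rewrite -(subnKC (ltnW hn)); set j := (n - n')%N => E.
have [i00 _] : (i = 0 /\ j = 0)%N.
  apply: (Ascale Aa' Aa).
  apply: (mulfI (pqn0 m' n')).
  transitivity (p ^+ m' * (q ^+ n' * a')); first ring.
  by rewrite -E !exprD; ring.
by rewrite i00 in i0.
Qed.

End S.

Unset Implicit Arguments. Set Strict Implicit.

Theorem proposition2 (R : realType) (p q : R) (K : set R) :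
  0 < p < 2^-1 -> 0 < q < 2^-1 ->
  let S1 := fun x : R => p * x in
  let S2 := fun x : R => q * x in
  let S3 := fun x : R => p * x + 1 - p in
  let S4 := fun x : R => q * x + 1 - q in
  is_attractor [:: S1; S2; S3; S4] K ->
  let A := (S3 @` K) `|` (S4 @` K) in
  (forall m n : nat, (0 < m)%N -> (0 < n)%N ->
     (iter m S1 @` A) `&` (iter n S2 @` A) = set0) ->
  (* (i) *)
  (K = [set 0] `|` \bigcup_(mn in [set: nat * nat])
                     (iter mn.1 S1 @` (iter mn.2 S2 @` A))
   /\ (forall m n m' n' : nat, (m, n) <> (m', n') ->
         (iter m S1 @` (iter n S2 @` A)) `&` (iter m' S1 @` (iter n' S2 @` A))
         = set0)
   /\ (forall m n : nat, ~ (iter m S1 @` (iter n S2 @` A)) 0))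
  /\
  (* (ii) *)
  (forall m n : nat,
     (iter m S1 @` K) `&` (iter n S2 @` K) = iter m S1 @` (iter n S2 @` K)).
Proof.
move=> hp hq; cbv zeta => -[K0 [cK KE]] Hdis0.
have H : hyps p q K.
  constructor => //.
  - move=> x; rewrite {1}KE => -[i /= hi [y Ky <-]].
    case: i hi => [|[|[|[|i]]]] //= _.
    + by left; exists y.
    + by right; left; exists y.
    + by right; right; left; exists y.
    + by right; right; right; exists y.
  - by move=> y Ky; rewrite KE; exists 0%N => //; exists y.
  - by move=> y Ky; rewrite KE; exists 1%N => //; exists y.
  - move=> a [] [y Ky <-]; rewrite KE; [exists 2%N | exists 3%N] => //; by exists y.
  - have [M [_ HM]] := compact_bounded cK.
    by exists (M + 1); apply: HM; rewrite ltrDl.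
  - exact: compact_closed (@Rhausdorff R) cK.
  - move=> i j a a' i0 j0 Aa Aa' E.
    have := Hdis0 i j i0 j0.
    move/seteqP => [+ _] => /(_ (p ^+ i * a)); apply.
    split; [exists a | exists a'] => //; by rewrite iter_mul.
split; first split; [|split|].
- apply/seteqP; split => x.
    move=> Kx; have /andP[x0 _] := K01 H Kx.
    case: (ltgtP x 0) x0 => //; last by move=> -> _; left.
    move=> xp _; right; have [m [n [a [Aa ->]]]] := decomp H Kx xp.
    exists (m, n) => //=; exists (q ^+ n * a); first by exists a => //; rewrite iter_mul.
    by rewrite iter_mul.
  case=> [->|]; first exact: zero_in H.
  move=> [[m n] _ /= [z [a Aa <-] <-]].
  by rewrite !iter_mul; apply: (Kpow H); apply: (Kqpow H); apply: (AK H).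
- move=> m n m' n' ne; apply/seteqP; split => x //.
  move=> [[z [a Aa <-] <-] [z' [a' Aa' <-] E]].
  rewrite !iter_mul in E.
  by have [? ?] := disj H Aa' Aa E; apply: ne; congr pair.
- move=> m n [z [a Aa <-]]; rewrite !iter_mul => E.
  have /andP[a0 _] := Apos H Aa.
  have [/andP[p0 _] /andP[q0 _]] := (hp, hq).
  have : 0 < p ^+ m * (q ^+ n * a) by rewrite !mulr_gt0 ?exprn_gt0 //; lra.
  by rewrite E ltxx.
- move=> m n; apply/seteqP; split => x.
  + move=> [[k Kk <-] [k' Kk' E]]; rewrite !iter_mul in E *.
    have [/andP[p0 _] /andP[q0 _]] := (hp, hq).
    have /andP[k0 _] := K01 H Kk.
    have P0 : 0 < p ^+ m by rewrite exprn_gt0.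
    have Q0 : 0 < q ^+ n by rewrite exprn_gt0.
    case: (ltgtP k 0) k0 => // [kp _|-> _]; last first.
      exists 0; first by exists 0; [exact: zero_in H | rewrite iter_mul mulr0].
      by rewrite iter_mul !mulr0.
    have k'p : 0 < k'.
      have : 0 < p ^+ m * k by rewrite mulr_gt0.
      by rewrite -E; nra.
    have [a [b [al [Aal Ek]]]] := decomp H Kk kp.
    have [c [d [be [Abe Ek']]]] := decomp H Kk' k'p.
    have [ec ed] : (m + a = c /\ b = n + d)%N.
      apply: (disj H Aal Abe).
      transitivity (p ^+ m * k); first by rewrite Ek exprD; ring.
      by rewrite -E Ek' exprD; ring.
    exists (q ^+ n * (p ^+ a * (q ^+ d * al))).
      exists (p ^+ a * (q ^+ d * al)); last by rewrite iter_mul.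
      by apply: (Kpow H); apply: (Kqpow H); apply: (AK H).
    by rewrite iter_mul Ek ed exprD; ring.
  + move=> [z [k Kk <-] <-]; rewrite !iter_mul; split.
      by exists (q ^+ n * k); [exact: (Kqpow H) | rewrite iter_mul].
    by exists (p ^+ m * k); [exact: (Kpow H) | rewrite iter_mul mulrCA].
Qed.
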